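(* Let $\mathsf{K}$ be a field, $m$ a positive integer and $\alpha \in \mathsf{K}$ a primitive $m$-th root of unity. Let $f \in \mathsf{K}[z]$ be a polynomial with at most $t$ nonzero terms and $\deg f < m$, and let $a_i = f(\alpha^i)$ for $i \ge 0$. Let $r \ge 0$, $s > 0$ and $k$ be integers with $\gcd(s,m)=1$ and $k \ge 2t$. Then $f$ is determined by the affine sub-sequence $(a_r, a_{r+s}, a_{r+2s}, \dots, a_{r+(k-1)s})$: if $g \in \mathsf{K}[z]$ has at most $t$ nonzero terms, $\deg g < m$, and $g(\alpha^{r+is}) = a_{r+is}$ for all $0 \le i \le k-1$, then $g = f$. *)

(* Defs.v *)
From mathcomp Require Import all_boot all_algebra.
Set Implicit Arguments. Unset Strict Implicit. Unset Printing Implicit Defensive.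
Import GRing.Theory.
Local Open Scope ring_scope.

Definition nterms (K : fieldType) (p : {poly K}) : nat :=
  count (fun c : K => c != 0) (polyseq p).

(* Main.v *)
Require Import Defs.
From mathcomp Require Import all_boot all_algebra.
From mathcomp Require Import zify.
Import GRing.Theory.
Local Open Scope ring_scope.

Section Aux.
Variable K : fieldType.

Lemma vander_zero (S : seq nat) (c b : nat -> K) :
  uniq S -> {in S &, injective b} ->
  (forall i, (i < size S)%N -> \sum_(e <- S) c e * b e ^+ i = 0) ->
  forall e, e \in S -> c e = 0.
Proof.
move=> uS ib H e0 e0S.
have lin : forall q : {poly K}, (size q <= size S)%N ->
    \sum_(e <- S) c e * q.[b e] = 0.
  move=> q sq.
  under eq_bigr => e _ do rewrite horner_coef big_distrr /=.
  rewrite exchange_big /= big1 // => i _.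
  under eq_bigr => e _ do rewrite mulrCA.
  rewrite -big_distrr /= H ?mulr0 //.
  exact: leq_trans (ltn_ord i) sq.
set q := \prod_(x <- map b (rem e0 S)) ('X - x%:P).
have sq : (size q <= size S)%N.
  rewrite /q size_prod_XsubC size_map size_rem //.
  by case: (S) e0S.
have := lin q sq.
rewrite (bigD1_seq e0) //= big1_seq ?addr0.
  move/eqP; rewrite mulf_eq0 => /orP[/eqP //|].
  rewrite -/(root q (b e0)) /q root_prod_XsubC => /mapP [j].
  rewrite mem_rem_uniq // => /andP [nj jS] bj.
  by move: nj; rewrite (ib _ _ e0S jS bj) eqxx.
move=> e /andP [ne eS].
have: root q (b e).
  by rewrite /q root_prod_XsubC map_f // mem_rem_uniq // inE ne eS.
by move/eqP => ->; rewrite mulr0.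
Qed.

End Aux.


Lemma supp_size (K : fieldType) (m : nat) (p : {poly K}) : (size p <= m)%N ->
  size [seq e <- iota 0 m | p`_e != 0] = nterms p.
Proof.
move=> sp; rewrite size_filter /nterms -{2}(mkseq_nth 0 p) /mkseq count_map.
rewrite -(subnKC sp) iotaD count_cat add0n.
rewrite (@eq_in_count _ _ pred0 (iota (size p) _)) ?count_pred0 ?addn0 //.
move=> i; rewrite mem_iota => /andP [hi _] /=.
by rewrite nth_default ?eqxx.
Qed.

Lemma horner_supp (K : fieldType) (m : nat) (p : {poly K}) (x : K) :
  (size p <= m)%N ->
  p.[x] = \sum_(e <- [seq e <- iota 0 m | p`_e != 0]) p`_e * x ^+ e.
Proof.
move=> sp; rewrite (horner_coef_wide x sp) -(big_mkord xpredT (fun i => p`_i * x ^+ i)) big_filter.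
rewrite [RHS]big_mkcond /index_iota subn0 /=; apply: eq_bigr => i _.
by case: (p`_i =P 0) => [->|]; rewrite ?mul0r.
Qed.

Theorem lemma1 (K : fieldType) (m : nat) (alpha : K) (t r s k : nat)
  (f g : {poly K}) :
  (0 < m)%N -> m.-primitive_root alpha ->
  (nterms f <= t)%N -> (size f <= m)%N ->
  (0 < s)%N -> coprime s m -> (2 * t <= k)%N ->
  (nterms g <= t)%N -> (size g <= m)%N ->
  (forall i : nat, (i < k)%N ->
     g.[alpha ^+ (r + i * s)] = f.[alpha ^+ (r + i * s)]) ->
  g = f.
Proof.
move=> m0 pr nf sf s0 cop tk ng sg H.
set h := g - f.
have sh : (size h <= m)%N.
  apply: leq_trans (size_polyD _ _) _; rewrite size_polyN geq_max sg sf //.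
set S := [seq e <- iota 0 m | h`_e != 0].
have uS : uniq S by rewrite filter_uniq // iota_uniq.
have szS : (size S <= k)%N.
  apply: leq_trans tk.
  have -> : (2 * t = t + t)%N by rewrite mul2n addnn.
  apply: leq_trans (leq_add ng nf); rewrite -(@supp_size _ _ _ sg) -(@supp_size _ _ _ sf) -size_cat.
  apply: uniq_leq_size => // e; rewrite mem_filter mem_cat !mem_filter.
  case/andP=> he ->; rewrite !andbT; apply: contraLR he; rewrite negb_or !negbK => /andP [/eqP g0 /eqP f0].
  by rewrite /h coefB g0 f0 subrr.
have a0 : alpha != 0.
  apply/eqP => a0; move: (prim_expr_order pr); rewrite a0 expr0n.
  by move: m0; rewrite lt0n => /negbTE ->; move/eqP; rewrite eq_sym oner_eq0.
have prs : m.-primitive_root (alpha ^+ s) by rewrite prim_root_exp_coprime.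
have Z := @vander_zero K S (fun e => h`_e * alpha ^+ r ^+ e) (fun e => (alpha ^+ s) ^+ e) uS.
have ce : forall e, e \in S -> h`_e * alpha ^+ r ^+ e = 0.
  apply: Z.
    move=> e1 e2; rewrite !mem_filter !mem_iota /= !add0n => /andP [_ l1] /andP [_ l2].
    move/eqP; rewrite (eq_prim_root_expr prs) !modn_small //.
    by move/eqP.
  move=> i li.
  have E := H i (leq_trans li szS).
  transitivity h.[alpha ^+ (r + i * s)]; last by rewrite /h hornerD hornerN E subrr.
  rewrite (@horner_supp _ _ _ _ sh).
  apply: eq_bigr => e _; rewrite -mulrA; congr (_ * _).
  rewrite -!exprM -exprD; congr (_ ^+ _); lia.
apply/eqP; rewrite -subr_eq0 -/h; apply/eqP/polyP => i; rewrite coef0.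
case: (ltnP i m) => him; last by rewrite nth_default // (leq_trans sh).
apply/eqP/negPn/negP => hi.
have: i \in S by rewrite mem_filter hi mem_iota.
move/ce/eqP; rewrite mulf_eq0 (negbTE hi) /= !expf_eq0 (negbTE a0) !andbF.
by [].
Qed.
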